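(* Let $\mathcal{D}_D$ (the Defender data) and $\mathcal{D}_R$ (the Reserved data) be finite, nonempty, disjoint sets of samples, and let $\ell$ be the loss function used to train the Defender model, assumed bounded with $0 \le \ell(x) \le 1$ for all $x$. Let $e_R = \mathbb{E}_{u \sim \mathcal{D}_R}[\ell(u)]$ and $e_D = \mathbb{E}_{u \sim \mathcal{D}_D}[\ell(u)]$, with $u$ drawn uniformly. If $e_R > e_D$, then there is an LTU attack strategy whose LTU membership classification accuracy satisfies $$A_{ltu} \ge \tfrac{1}{2} + \tfrac{1}{2}(e_R - e_D).$$
   Context: An LTU (Leave-Two-Unlabeled) round is as follows: a Defender sample $d$ is drawn uniformly from $\mathcal{D}_D$ and a Reserved sample $r$ is drawn uniformly from $\mathcal{D}_R$, independently; the two samples are presented to the attacker as a pair $(u_1,u_2)$ in uniformly random order, with their membership labels hidden (exactly one of $u_1,u_2$ belongs to $\mathcal{D}_D$). The attacker (which may evaluate $\ell$ and may use its own independent randomness) must predict which of $u_1,u_2$ belongs to $\mathcal{D}_D$. The LTU membership classification accuracy $A_{ltu}$ is the probability (over the draw of $d$, $r$, the ordering, and the attacker's randomness) that this prediction is correct. *)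

(* Defs.v *)
From HB Require Import structures.
From mathcomp Require Import all_boot all_order all_algebra.
Set Implicit Arguments. Unset Strict Implicit. Unset Printing Implicit Defensive.
Import Order.TTheory GRing.Theory Num.Theory.
Local Open Scope ring_scope.

Definition umean (R : realFieldType) (T : finType) (A : {set T}) (f : T -> R) : R :=
  (\sum_(u in A) f u) / #|A|%:R.

(* A (randomized) LTU attack strategy: given the losses (a1, a2) of the two
   presented samples (u1, u2), p a1 a2 is the probability with which the
   attacker predicts that u1 is the Defender sample (otherwise it predicts u2).
   The attacker only sees the samples through the loss ell; it uses its own
   independent randomness, encoded by the probability p. *)
Definition valid_strategy (R : realFieldType) (p : R -> R -> R) : Prop :=
  forall a b : R, 0 <= p a b <= 1.

(* LTU membership classification accuracy: d uniform in DD, r uniform in DR,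
   independent; with probability 1/2 the pair is (d, r) (correct iff the attacker
   predicts u1), with probability 1/2 it is (r, d) (correct iff it predicts u2). *)
Definition ltu_accuracy (R : realFieldType) (T : finType) (DD DR : {set T})
    (ell : T -> R) (p : R -> R -> R) : R :=
  (\sum_(d in DD) \sum_(r in DR)
      (2^-1 * p (ell d) (ell r) + 2^-1 * (1 - p (ell r) (ell d))))
  / (#|DD|%:R * #|DR|%:R).

(* Main.v *)
Require Import Defs.
From HB Require Import structures.
From mathcomp Require Import all_boot all_order all_algebra.
From mathcomp Require Import ring lra.
Import Order.TTheory GRing.Theory Num.Theory.
Local Open Scope ring_scope.

Theorem theorem2 (R : realFieldType) (T : finType) (DD DR : {set T})
    (ell : T -> R)
    (hDD : DD != set0) (hDR : DR != set0) (hdisj : [disjoint DD & DR])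
    (hell : forall x : T, 0 <= ell x <= 1)
    (hgap : umean DR ell > umean DD ell) :
  exists p : R -> R -> R, valid_strategy p /\
    ltu_accuracy DD DR ell p >= 2^-1 + 2^-1 * (umean DR ell - umean DD ell).
Proof.
pose p := fun a b : R => Num.min 1 (Num.max 0 ((1 + b - a) / 2)).
exists p; split.
  move=> a b; rewrite /p; apply/andP; split.
    by rewrite le_min ler01 le_max lexx.
  by rewrite ge_min lexx.
have hp : forall x y : T, p (ell x) (ell y) = (1 + ell y - ell x) / 2.
  move=> x y; rewrite /p.
  have := hell x; have := hell y => /andP[h1 h2] /andP[h3 h4].
  rewrite max_r; last by lra.
  by rewrite min_r //; lra.
have nD : (0 < #|DD|)%N by rewrite card_gt0.
have nR : (0 < #|DR|)%N by rewrite card_gt0.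
have nD' : (#|DD|%:R : R) != 0 by rewrite pnatr_eq0 -lt0n.
have nR' : (#|DR|%:R : R) != 0 by rewrite pnatr_eq0 -lt0n.
rewrite /ltu_accuracy /umean.
set SD := \sum_(u in DD) ell u. set SR := \sum_(u in DR) ell u.
have E : \sum_(d in DD) \sum_(r in DR)
      (2^-1 * p (ell d) (ell r) + 2^-1 * (1 - p (ell r) (ell d)))
   = \sum_(d in DD) (2^-1 *+ #|DR| + 2^-1 * SR - (2^-1 * ell d) *+ #|DR|).
  apply: eq_bigr => d _.
  rewrite (eq_bigr (fun r => 2^-1 + 2^-1 * ell r - 2^-1 * ell d)); last first.
    by move=> r _; rewrite !hp; field.
  by rewrite sumrB big_split /= !sumr_const -mulr_sumr.
rewrite E sumrB big_split /= !sumr_const.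
under eq_bigr => i _ do rewrite -mulr_natr.
rewrite -mulr_suml -mulr_sumr -/SD.
rewrite -[2^-1 *+ #|DR| *+ #|DD|]mulr_natr -[2^-1 *+ #|DR|]mulr_natr -[2^-1 * SR *+ #|DD|]mulr_natr.
clearbody SD SR.
rewrite le_eqVlt; apply/orP; left; apply/eqP.
field.
by rewrite nD' nR'.
Qed.
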